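(* Let $n\ge 2$. If some set maximizing $\overline{re}$ over nonempty subsets of $\mathbb{S}$ has cardinality $2$, then $\{1,2\}$ maximizes $\overline{re}$ over nonempty subsets of $\mathbb{S}$ (no assumption on the size of the equilibrium demands is needed).
   Context: Market model: sellers $\mathbb{S}=\{1,\dots,n\}$, product qualities $\theta_1\ge\dots\ge\theta_n\ge0$. For displayed set $S$ and prices $p_i\ge0$: $a_i=e^{\theta_i-p_i}$, MNL demand $q_i=a_i/(1+\sum_{j\in S}a_j)$; sellers in $S$ play the Bertrand game (seller $i$ chooses $p_i\ge0$ to maximize $p_iq_i$). $V:(0,\infty)\to(0,1)$: $V(x)=$ the unique $v\in(0,1)$ with $v\exp(v/(1-v))=x$. For nonempty $S$, $\bar q_0(S)\in(0,1)$ is the unique solution of $\sum_{i\in S}V(\bar q_0e^{\theta_i-1})=1-\bar q_0$, $\bar q_i(S)=V(\bar q_0(S)e^{\theta_i-1})$, and $\overline{re}(S)=\sum_{i\in S}\frac{\bar q_i(S)}{1-\bar q_i(S)}$. *)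

(* Defs.v *)
From Stdlib Require Import Reals Lra Lia ClassicalEpsilon.
Open Scope R_scope.

(* Sellers are indexed 0..n-1 (seller k+1 of the paper is index k).
   A subset of the sellers is a boolean predicate S on nat; only indices
   i < n are relevant. *)

Fixpoint rsum (n : nat) (f : nat -> R) : R :=
  match n with
  | O => 0
  | S k => rsum k f + f k
  end.

Definition sum_in (n : nat) (S : nat -> bool) (f : nat -> R) : R :=
  rsum n (fun i => if S i then f i else 0).

Fixpoint card_in (n : nat) (S : nat -> bool) : nat :=
  match n with
  | O => O
  | Datatypes.S k => (card_in k S + (if S k then 1 else 0))%nat
  end.

Definition nonempty_in (n : nat) (S : nat -> bool) : Prop :=
  exists i, (i < n)%nat /\ S i = true.

Definition V (x : R) : R :=
  epsilon (inhabits 0) (fun v => 0 < v < 1 /\ v * exp (v / (1 - v)) = x).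

Definition qbar0 (n : nat) (theta : nat -> R) (S : nat -> bool) : R :=
  epsilon (inhabits 0)
    (fun q => 0 < q < 1 /\
       sum_in n S (fun i => V (q * exp (theta i - 1))) = 1 - q).

Definition qbar (n : nat) (theta : nat -> R) (S : nat -> bool) (i : nat) : R :=
  V (qbar0 n theta S * exp (theta i - 1)).

Definition rebar (n : nat) (theta : nat -> R) (S : nat -> bool) : R :=
  sum_in n S (fun i => qbar n theta S i / (1 - qbar n theta S i)).

Definition maximizes_rebar (n : nat) (theta : nat -> R) (S : nat -> bool) : Prop :=
  nonempty_in n S /\
  forall T : nat -> bool, nonempty_in n T -> rebar n theta T <= rebar n theta S.

(* the set {1,2} of the paper = indices {0,1} *)
Definition top2 (i : nat) : bool := Nat.ltb i 2.

(* Main.v *)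
From Stdlib Require Import Reals Lra Lia.
From Coquelicot Require Import Coquelicot.
From Stdlib Require Import Ranalysis5 ClassicalEpsilon.
Require Import Defs.
Open Scope R_scope.

Definition fV (v : R) : R := v * exp (v / (1 - v)).

Lemma fV_cont : forall a, a < 1 -> continuity_pt fV a.
Proof.
  intros a Ha. apply continuity_pt_filterlim.
  apply (ex_derive_continuous (V:=R_NormedModule)). unfold fV. auto_derive. lra.
Qed.

Lemma fV_lt : forall u w, 0 < u -> u < w -> w < 1 -> fV u < fV w.
Proof.
  intros u w Hu Huw Hw. unfold fV.
  assert (u/(1-u) < w/(1-w)).
  { apply Rmult_lt_reg_r with ((1-u)*(1-w)). nra.
    field_simplify; try lra; nra. }
  apply exp_increasing in H. pose proof (exp_pos (u/(1-u))). nra.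
Qed.

Lemma fV_exists : forall x, 0 < x -> exists v, 0 < v < 1 /\ fV v = x.
Proof.
  intros x Hx.
  set (b := (x+1)/(x+2)).
  assert (Hb : 0 < b < 1) by (unfold b; split; [apply Rdiv_lt_0_compat; lra | apply Rmult_lt_reg_r with (x+2); [lra|]; field_simplify; lra]).
  assert (Hbb : b / (1 - b) = x + 1) by (unfold b; field; lra).
  destruct (IVT_interv (fun v => fV v - x) 0 b) as [z [Hz1 Hz2]].
  - intros c Hc. apply continuity_pt_minus. apply fV_cont. lra. apply continuity_pt_const. intros u w; reflexivity.
  - lra.
  - unfold fV. replace (0 / (1 - 0)) with 0 by field. lra.
  - unfold fV. rewrite Hbb. pose proof (exp_ineq1 (x+1)).
    assert (b * (x+2) = x + 1) by (unfold b; field; lra). nra.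
  - exists z. split; [|lra]. split; [|lra].
    destruct (Req_dec z 0) as [E|E]; [|lra]. subst z. unfold fV in Hz2.
    replace (0 / (1 - 0)) with 0 in Hz2 by field. lra.
Qed.

Lemma V_spec : forall x, 0 < x -> 0 < V x < 1 /\ fV (V x) = x.
Proof.
  intros x Hx. unfold V.
  apply (epsilon_spec (inhabits 0) (fun v => 0 < v < 1 /\ v * exp (v / (1 - v)) = x)).
  apply fV_exists; auto.
Qed.

Lemma fV_le : forall u w, 0 < u -> u <= w -> w < 1 -> fV u <= fV w.
Proof.
  intros u w Hu Huw Hw. destruct (Req_dec u w). subst; lra. left; apply fV_lt; lra.
Qed.

Lemma fV_gt_id : forall v, 0 < v < 1 -> v < fV v.
Proof.
  intros v Hv. unfold fV.
  assert (0 < v/(1-v)) by (apply Rdiv_lt_0_compat; lra).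
  pose proof (exp_ineq1 (v/(1-v))). nra.
Qed.

Lemma V_lt : forall x y, 0 < x -> x < y -> V x < V y.
Proof.
  intros x y Hx Hxy. destruct (V_spec x Hx) as [H1 H2]. destruct (V_spec y ltac:(lra)) as [H3 H4].
  destruct (Rlt_or_le (V x) (V y)) as [L|L]; auto.
  pose proof (fV_le (V y) (V x)). lra.
Qed.

Lemma V_lt_id : forall x, 0 < x -> V x < x.
Proof.
  intros x Hx. destruct (V_spec x Hx) as [H1 H2]. pose proof (fV_gt_id (V x) H1). lra.
Qed.

Lemma V_cont : forall x0, 0 < x0 -> continuity_pt V x0.
Proof.
  intros x0 Hx0. destruct (V_spec x0 Hx0) as [Hv0 Hf0].
  unfold continuity_pt, continue_in, limit1_in, limit_in. intros eps Heps.
  set (v0 := V x0) in *.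
  set (vm := Rmax (v0 - eps/2) (v0/2)).
  set (vp := Rmin (v0 + eps/2) ((1+v0)/2)).
  assert (Hvm : 0 < vm < v0 /\ v0 - eps/2 <= vm).
  { unfold vm. split; [split|].
    - apply Rlt_le_trans with (v0/2). lra. apply Rmax_r.
    - apply Rmax_lub_lt; lra.
    - apply Rmax_l. }
  assert (Hvp : v0 < vp < 1 /\ vp <= v0 + eps/2).
  { unfold vp. split; [split|].
    - apply Rmin_glb_lt; lra.
    - apply Rle_lt_trans with ((1+v0)/2). apply Rmin_r. lra.
    - apply Rmin_l. }
  assert (F1 : fV vm < x0) by (rewrite <- Hf0; apply fV_lt; lra).
  assert (F2 : x0 < fV vp) by (rewrite <- Hf0; apply fV_lt; lra).
  assert (F0 : 0 < fV vm) by (pose proof (fV_gt_id vm); lra).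
  exists (Rmin (x0 - fV vm) (fV vp - x0)). split.
  { apply Rmin_glb_lt; lra. }
  intros x [_ Hx]. simpl in *. unfold R_dist in *.
  assert (Hm1 := Rmin_l (x0 - fV vm) (fV vp - x0)).
  assert (Hm2 := Rmin_r (x0 - fV vm) (fV vp - x0)).
  apply Rabs_def2 in Hx. destruct Hx as [Hxa Hxb].
  assert (Hx : fV vm < x < fV vp) by lra.
  destruct (V_spec x ltac:(lra)) as [Hv Hf].
  assert (vm < V x).
  { destruct (Rlt_or_le vm (V x)) as [L|L]; auto. pose proof (fV_le (V x) vm). lra. }
  assert (V x < vp).
  { destruct (Rlt_or_le (V x) vp) as [L|L]; auto. pose proof (fV_le vp (V x)). lra. }
  apply Rabs_def1; lra.
Qed.

Lemma root_exists (F : R -> R) (C : R) :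
  (forall q, 0 < q -> continuity_pt F q) -> 0 < F 1 -> 0 <= C ->
  (forall q, 0 < q -> F q <= C * q) -> exists q, 0 < q < 1 /\ F q = 1 - q.
Proof.
  intros Hc H1 HC Hb.
  set (d := / (C + 2)).
  assert (Hd : 0 < d < 1).
  { unfold d. split. apply Rinv_0_lt_compat; lra.
    apply Rmult_lt_reg_r with (C+2). lra. rewrite Rinv_l; lra. }
  assert (Hd2 : (C + 2) * d = 1) by (unfold d; field; lra).
  destruct (IVT_interv (fun q => F q + q - 1) d 1) as [z [Hz1 Hz2]].
  - intros c Hc'. apply continuity_pt_minus. apply continuity_pt_plus. apply Hc; lra.
    apply continuity_pt_id. apply continuity_pt_const. intros u w; reflexivity.
  - lra.
  - pose proof (Hb d ltac:(lra)). nra.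
  - lra.
  - exists z. split; [|lra]. split; [lra|].
    destruct (Req_dec z 1) as [E|E]; [|lra]. subst z. lra.
Qed.
Definition sf (a r : R) : R := r - 1 + (1 + r) / (r * (1 + exp r / a)).
Definition Pf (a r : R) : R :=
  1 + exp r / a + (exp r / a)^2 - (1 + exp r / a * (1 + r)) / r^2.
Definition dPf (a r : R) : R :=
  exp r / a + 2 * (exp r / a)^2 - exp r / a / r + 2 / r^3 + 2 * (exp r / a) / r^3.

Lemma sf_deriv : forall a r, 0 < a -> 0 < r ->
  derivable_pt_lim (sf a) r (Pf a r / (1 + exp r / a)^2).
Proof.
  intros a r Ha Hr. apply is_derive_Reals. unfold sf.
  pose proof (exp_pos r).
  assert (0 < exp r / a) by (apply Rdiv_lt_0_compat; lra).
  auto_derive.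
  - apply Rgt_not_eq. apply Rmult_lt_0_compat. lra. unfold Rdiv in *. lra.
  - unfold Pf. field. unfold Rdiv in *. repeat split; lra.
Qed.

Lemma Pf_deriv : forall a r, 0 < a -> 0 < r ->
  derivable_pt_lim (Pf a) r (dPf a r).
Proof.
  intros a r Ha Hr. apply is_derive_Reals. unfold Pf.
  auto_derive.
  - repeat split; try lra. apply Rgt_not_eq. nra.
  - unfold dPf. field. lra.
Qed.

Lemma dPf_pos : forall a r, 0 < a -> 0 < r -> 0 < dPf a r.
Proof.
  intros a r Ha Hr. unfold dPf. set (E := exp r / a).
  assert (0 < E) by (unfold E; apply Rdiv_lt_0_compat; [apply exp_pos|lra]).
  assert (dPf_eq : E + 2 * E^2 - E / r + 2 / r^3 + 2 * E / r^3
     = (E * (r^3 - r^2 + 2) + 2) / r^3 + 2 * E^2) by (field; lra).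
  rewrite dPf_eq.
  assert (0 < r^3 - r^2 + 2) by (destruct (Rle_lt_dec r 1); simpl; nra).
  assert (0 < r^3) by (apply pow_lt; lra).
  assert (0 < (E * (r^3 - r^2 + 2) + 2) / r^3) by (apply Rdiv_lt_0_compat; nra).
  nra.
Qed.

Lemma sf_key : forall a x x0 R, 0 < a -> 0 < x -> x <= x0 -> x0 < R ->
  sf a R <= sf a x0 -> sf a x0 <= sf a x.
Proof.
  intros a x x0 R Ha Hx Hxx0 Hx0R HR.
  destruct (Req_dec x x0) as [E|E]; [subst; lra|].
  destruct (Rle_or_lt (sf a x0) (sf a x)) as [L|L]; auto. exfalso.
  set (sd := fun r => Pf a r / (1 + exp r / a)^2).
  assert (Hpos : forall r, 0 < (1 + exp r / a)^2).
  { intro r. assert (0 < exp r / a) by (apply Rdiv_lt_0_compat; [apply exp_pos|lra]). nra. }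
  destruct (MVT_cor2 (sf a) sd x x0) as [c [Hc1 Hc2]]. lra.
  { intros c Hc. apply sf_deriv; lra. }
  assert (Pc : 0 < Pf a c).
  { assert (0 < sd c) by (apply Rmult_lt_reg_r with (x0 - x); nra).
    unfold sd in H. pose proof (Hpos c).
    apply Rmult_lt_reg_r with (/ (1 + exp c / a)^2). apply Rinv_0_lt_compat; auto.
    rewrite Rmult_0_l. exact H. }
  destruct (MVT_cor2 (sf a) sd x0 R) as [d [Hd1 Hd2]]. lra.
  { intros d Hd. apply sf_deriv; lra. }
  destruct (MVT_cor2 (Pf a) (dPf a) c d) as [e [He1 He2]]. lra.
  { intros e He. apply Pf_deriv; lra. }
  pose proof (dPf_pos a e Ha ltac:(lra)).
  assert (Pd : 0 < Pf a d) by nra.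
  assert (0 < sd d).
  { unfold sd. apply Rdiv_lt_0_compat; auto. }
  nra.
Qed.

Definition rr (v : R) : R := v / (1 - v).

Lemma rr_lt : forall u w, u < w -> w < 1 -> rr u < rr w.
Proof.
  intros u w H1 H2. unfold rr. apply Rmult_lt_reg_r with ((1-u)*(1-w)). nra.
  field_simplify; try lra; nra.
Qed.

Lemma rr_pos : forall v, 0 < v < 1 -> 0 < rr v.
Proof. intros v Hv. unfold rr. apply Rdiv_lt_0_compat; lra. Qed.

Lemma pair_sf : forall a b q, 0 < a -> 0 < b -> 0 < q < 1 ->
  V (q * a) + V (q * b) = 1 - q ->
  rr (V (q * a)) + rr (V (q * b)) = sf a (rr (V (q * a))).
Proof.
  intros a b q Ha Hb Hq Heq.
  destruct (V_spec (q*a) ltac:(nra)) as [H1 F1].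
  destruct (V_spec (q*b) ltac:(nra)) as [H2 F2].
  set (v1 := V (q*a)) in *. set (v2 := V (q*b)) in *.
  unfold fV in F1. unfold sf, rr.
  assert (Ex : exp (v1 / (1 - v1)) = q * a / v1) by (apply Rmult_eq_reg_l with v1; [|lra]; rewrite F1; field; lra).
  rewrite Ex. replace v2 with (1 - q - v1) by lra.
  field. repeat split; try lra. 
Qed.

Lemma single_sf : forall a q, 0 < a -> 0 < q < 1 -> V (q * a) = 1 - q ->
  sf a (rr (V (q * a))) = rr (V (q * a)).
Proof.
  intros a q Ha Hq Heq.
  destruct (V_spec (q*a) ltac:(nra)) as [H1 F1].
  set (v1 := V (q*a)) in *. unfold fV in F1. unfold sf, rr.
  assert (Ex : exp (v1 / (1 - v1)) = q * a / v1) by (apply Rmult_eq_reg_l with v1; [|lra]; rewrite F1; field; lra).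
  rewrite Ex. replace q with (1 - v1) by lra. field. repeat split; lra.
Qed.

Lemma pair_lt_single : forall a b q qA, 0 < a -> 0 < b -> 0 < q < 1 -> 0 < qA < 1 ->
  V (q * a) + V (q * b) = 1 - q -> V (qA * a) = 1 - qA ->
  V (q * a) < V (qA * a).
Proof.
  intros a b q qA Ha Hb Hq HqA E1 E2.
  destruct (V_spec (q*b) ltac:(nra)) as [H2 F2].
  destruct (Rlt_or_le (V (q*a)) (V (qA*a))) as [L|L]; auto. exfalso.
  destruct (Rlt_or_le q qA) as [L2|L2].
  - pose proof (V_lt (q*a) (qA*a) ltac:(nra) ltac:(nra)). lra.
  - lra.
Qed.

Lemma pair_mono : forall a b b' q q', 0 < a -> 0 < b -> b <= b' -> 0 < q < 1 -> 0 < q' < 1 ->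
  V (q * a) + V (q * b) = 1 - q -> V (q' * a) + V (q' * b') = 1 - q' ->
  V (q' * a) <= V (q * a).
Proof.
  intros a b b' q q' Ha Hb Hbb Hq Hq' E1 E2.
  destruct (Rle_or_lt (V (q'*a)) (V (q*a))) as [L|L]; auto. exfalso.
  destruct (Rle_or_lt q' q) as [L2|L2].
  - destruct (Req_dec q' q). subst. lra.
    pose proof (V_lt (q'*a) (q*a) ltac:(nra) ltac:(nra)). lra.
  - assert (V (q*b) < V (q'*b')) by (apply V_lt; nra). lra.
Qed.

Lemma key : forall a b b' q q' qA, 0 < a -> 0 < b -> b <= b' ->
  0 < q < 1 -> 0 < q' < 1 -> 0 < qA < 1 ->
  V (q * a) + V (q * b) = 1 - q -> V (q' * a) + V (q' * b') = 1 - q' ->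
  V (qA * a) = 1 - qA ->
  rr (V (qA * a)) <= rr (V (q * a)) + rr (V (q * b)) ->
  rr (V (q * a)) + rr (V (q * b)) <= rr (V (q' * a)) + rr (V (q' * b')).
Proof.
  intros a b b' q q' qA Ha Hb Hbb Hq Hq' HqA E1 E2 E3 Hle.
  rewrite (pair_sf a b q) by auto. rewrite (pair_sf a b' q') by (auto; lra).
  rewrite (pair_sf a b q) in Hle by auto. rewrite <- (single_sf a qA) in Hle by auto.
  destruct (V_spec (q'*a) ltac:(nra)) as [H1 _].
  destruct (V_spec (qA*a) ltac:(nra)) as [H3 _].
  destruct (V_spec (q*a) ltac:(nra)) as [H2 _].
  apply sf_key with (rr (V (qA * a))); auto.
  - apply rr_pos; auto.
  - pose proof (pair_mono a b b' q q' Ha Hb Hbb Hq Hq' E1 E2) as M.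
    destruct (Req_dec (V (q'*a)) (V (q*a))) as [e|e]. rewrite e; lra.
    left; apply rr_lt; lra.
  - apply rr_lt. eapply pair_lt_single; eauto. lra.
Qed.
Lemma rsum_ext : forall n f g, (forall k, (k < n)%nat -> f k = g k) -> rsum n f = rsum n g.
Proof.
  induction n; intros f g H; simpl; auto.
  rewrite (IHn f g) by (intros; apply H; lia). rewrite H by lia. reflexivity.
Qed.

Lemma rsum_plus : forall n f g, rsum n (fun k => f k + g k) = rsum n f + rsum n g.
Proof. induction n; intros; simpl. lra. rewrite IHn. lra. Qed.

Lemma rsum_zero : forall n f, (forall k, (k < n)%nat -> f k = 0) -> rsum n f = 0.
Proof. induction n; intros f H; simpl; auto. rewrite IHn by (intros; apply H; lia). rewrite H by lia. lra. Qed.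

Lemma rsum_single : forall n i F, (i < n)%nat ->
  rsum n (fun k => if Nat.eqb k i then F k else 0) = F i.
Proof.
  induction n; intros i F Hi. lia. simpl.
  destruct (Nat.eq_dec i n) as [->|Hne].
  - rewrite Nat.eqb_refl. rewrite rsum_zero. lra.
    intros k Hk. destruct (Nat.eqb_spec k n); [lia|reflexivity].
  - rewrite IHn by lia. destruct (Nat.eqb_spec n i); [lia|lra].
Qed.

Lemma sum_single : forall n S i F, (i < n)%nat ->
  (forall k, (k < n)%nat -> S k = Nat.eqb k i) -> sum_in n S F = F i.
Proof.
  intros n S i F Hi HS. unfold sum_in.
  rewrite (rsum_ext n _ (fun k => if Nat.eqb k i then F k else 0)).
  apply rsum_single; auto. intros k Hk. rewrite HS; auto.
Qed.

Lemma sum_pair : forall n S i j F, (i < n)%nat -> (j < n)%nat -> i <> j ->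
  (forall k, (k < n)%nat -> S k = orb (Nat.eqb k i) (Nat.eqb k j)) -> sum_in n S F = F i + F j.
Proof.
  intros n S i j F Hi Hj Hij HS. unfold sum_in.
  rewrite (rsum_ext n _ (fun k => (if Nat.eqb k i then F k else 0) + (if Nat.eqb k j then F k else 0))).
  rewrite rsum_plus. rewrite !rsum_single; auto.
  intros k Hk. rewrite HS; auto.
  destruct (Nat.eqb_spec k i); destruct (Nat.eqb_spec k j); simpl; try lia; lra.
Qed.

Lemma card0 : forall n S, card_in n S = 0%nat -> forall k, (k < n)%nat -> S k = false.
Proof.
  induction n; intros S H k Hk. lia. simpl in H.
  destruct (S n) eqn:Sn. lia. rewrite Nat.add_0_r in H.
  destruct (Nat.eq_dec k n) as [->|]; auto. apply IHn; auto; lia.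
Qed.

Lemma card1 : forall n S, card_in n S = 1%nat -> exists i, (i < n)%nat /\
  forall k, (k < n)%nat -> S k = Nat.eqb k i.
Proof.
  induction n; intros S H. simpl in H; lia. simpl in H.
  destruct (S n) eqn:Sn.
  - exists n. split. lia. intros k Hk. destruct (Nat.eq_dec k n) as [->|].
    rewrite Nat.eqb_refl; auto. destruct (Nat.eqb_spec k n); [lia|]. apply card0 with n; lia.
  - rewrite Nat.add_0_r in H. destruct (IHn S H) as [i [Hi HS]]. exists i. split. lia.
    intros k Hk. destruct (Nat.eq_dec k n) as [->|]. rewrite Sn. destruct (Nat.eqb_spec n i); [lia|auto].
    apply HS; lia.
Qed.

Lemma card2 : forall n S, card_in n S = 2%nat -> exists i j, (i < j)%nat /\ (j < n)%nat /\
  forall k, (k < n)%nat -> S k = orb (Nat.eqb k i) (Nat.eqb k j).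
Proof.
  induction n; intros S H. simpl in H; lia. simpl in H.
  destruct (S n) eqn:Sn.
  - assert (card_in n S = 1%nat) by lia. destruct (card1 n S H0) as [i [Hi HS]].
    exists i, n. split; [lia|split; [lia|]]. intros k Hk.
    destruct (Nat.eq_dec k n) as [->|]. rewrite Nat.eqb_refl, Sn. rewrite Bool.orb_true_r; auto.
    rewrite HS by lia. destruct (Nat.eqb_spec k n); [lia|]. rewrite Bool.orb_false_r; auto.
  - rewrite Nat.add_0_r in H. destruct (IHn S H) as [i [j [Hij [Hj HS]]]]. exists i, j.
    split; [lia|split; [lia|]]. intros k Hk. destruct (Nat.eq_dec k n) as [->|].
    rewrite Sn. destruct (Nat.eqb_spec n i); destruct (Nat.eqb_spec n j); try lia; reflexivity.
    apply HS; lia.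
Qed.

Lemma contV_lin : forall a q, 0 < a -> 0 < q -> continuity_pt (fun q => V (q * a)) q.
Proof.
  intros a q Ha Hq. change (continuity_pt (comp V (fun q => q * a)) q).
  apply continuity_pt_comp. apply continuity_pt_mult. apply continuity_pt_id.
  apply continuity_pt_const. intros u w; reflexivity.
  apply V_cont. nra.
Qed.

Lemma rebar_pair : forall n theta S i j, (i < n)%nat -> (j < n)%nat -> i <> j ->
  (forall k, (k < n)%nat -> S k = orb (Nat.eqb k i) (Nat.eqb k j)) ->
  exists q, 0 < q < 1 /\
    V (q * exp (theta i - 1)) + V (q * exp (theta j - 1)) = 1 - q /\
    rebar n theta S = rr (V (q * exp (theta i - 1))) + rr (V (q * exp (theta j - 1))).
Proof.
  intros n theta S i j Hi Hj Hij HS.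
  set (ai := exp (theta i - 1)). set (aj := exp (theta j - 1)).
  assert (Hai : 0 < ai) by apply exp_pos. assert (Haj : 0 < aj) by apply exp_pos.
  assert (Ex : exists q, 0 < q < 1 /\ sum_in n S (fun i => V (q * exp (theta i - 1))) = 1 - q).
  { destruct (root_exists (fun q => V (q * ai) + V (q * aj)) (ai + aj)) as [q [Hq Eq]].
    - intros q Hq. apply continuity_pt_plus; apply contV_lin; auto.
    - pose proof (V_spec (1*ai) ltac:(lra)). pose proof (V_spec (1*aj) ltac:(lra)). lra.
    - lra.
    - intros q Hq. pose proof (V_lt_id (q*ai) ltac:(nra)). pose proof (V_lt_id (q*aj) ltac:(nra)). lra.
    - exists q. split; auto. rewrite (sum_pair n S i j); auto. }
  pose proof (epsilon_spec (inhabits 0) _ Ex) as [Hq Eq].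
  fold (qbar0 n theta S) in Hq, Eq.
  exists (qbar0 n theta S). split; auto.
  rewrite (sum_pair n S i j) in Eq; auto. split; auto.
  unfold rebar. rewrite (sum_pair n S i j); auto.
Qed.

Lemma rebar_single : forall n theta S i, (i < n)%nat ->
  (forall k, (k < n)%nat -> S k = Nat.eqb k i) ->
  exists q, 0 < q < 1 /\
    V (q * exp (theta i - 1)) = 1 - q /\
    rebar n theta S = rr (V (q * exp (theta i - 1))).
Proof.
  intros n theta S i Hi HS.
  set (ai := exp (theta i - 1)).
  assert (Hai : 0 < ai) by apply exp_pos.
  assert (Ex : exists q, 0 < q < 1 /\ sum_in n S (fun i => V (q * exp (theta i - 1))) = 1 - q).
  { destruct (root_exists (fun q => V (q * ai)) ai) as [q [Hq Eq]].
    - intros q Hq. apply contV_lin; auto.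
    - pose proof (V_spec (1*ai) ltac:(lra)). lra.
    - lra.
    - intros q Hq. pose proof (V_lt_id (q*ai) ltac:(nra)). lra.
    - exists q. split; auto. rewrite (sum_single n S i); auto. }
  pose proof (epsilon_spec (inhabits 0) _ Ex) as [Hq Eq].
  fold (qbar0 n theta S) in Hq, Eq.
  exists (qbar0 n theta S). split; auto.
  rewrite (sum_single n S i) in Eq; auto. split; auto.
  unfold rebar. rewrite (sum_single n S i); auto.
Qed.

Lemma exp_le_m : forall x y, x <= y -> exp x <= exp y.
Proof. intros x y H. destruct (Req_dec x y). subst; lra. left; apply exp_increasing; lra. Qed.

Theorem theorem8 (n : nat) (theta : nat -> R)
  (hn : (2 <= n)%nat)
  (hmono : forall i j : nat, (i <= j)%nat -> (j < n)%nat -> theta j <= theta i)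
  (hnn : forall i : nat, (i < n)%nat -> 0 <= theta i) :
  (exists S : nat -> bool, maximizes_rebar n theta S /\ card_in n S = 2%nat) ->
  maximizes_rebar n theta top2.
Proof.
  intros [S [[HSne HSmax] Hc]].
  destruct (card2 n S Hc) as [i [j [Hij [Hjn HS]]]].
  set (T1 := fun k => orb (Nat.eqb k j) (Nat.eqb k 0)).
  set (Sj := fun k => Nat.eqb k j).
  set (S0 := fun k => Nat.eqb k 0).
  assert (Htop : forall k, (k < n)%nat -> top2 k = orb (Nat.eqb k 0) (Nat.eqb k 1)).
  { intros k _. destruct k as [|[|k]]; reflexivity. }
  assert (ne_single : forall m, (m < n)%nat -> nonempty_in n (fun k => Nat.eqb k m)).
  { intros m Hm. exists m. split; auto. apply Nat.eqb_refl. }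
  assert (Ha : forall k, 0 < exp (theta k - 1)) by (intro; apply exp_pos).
  destruct (rebar_pair n theta S i j) as [q [Hq [Eq RS]]]; try lia; auto.
  destruct (rebar_pair n theta T1 j 0%nat) as [q1 [Hq1 [Eq1 RT1]]]; try lia; auto.
  destruct (rebar_single n theta Sj j) as [qj [Hqj [Eqj RSj]]]; try lia; auto.
  assert (St1 : rebar n theta S <= rebar n theta T1).
  { rewrite RS, RT1. rewrite (Rplus_comm (rr (V (q * exp (theta i - 1))))).
    apply (key _ _ _ q q1 qj); auto.
    - apply exp_le_m. assert (theta i <= theta 0%nat) by (apply hmono; lia). lra.
    - lra.
    - rewrite <- RSj. rewrite Rplus_comm, <- RS. apply HSmax. apply ne_single; lia. }
  destruct (rebar_pair n theta top2 0%nat 1%nat) as [q2 [Hq2 [Eq2 R2]]]; try lia; auto.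
  destruct (rebar_single n theta S0 0%nat) as [q0 [Hq0 [Eq0 RS0]]]; try lia; auto.
  assert (St2 : rebar n theta T1 <= rebar n theta top2).
  { rewrite R2, RT1. rewrite (Rplus_comm (rr (V (q1 * exp (theta j - 1))))).
    apply (key _ _ _ q1 q2 q0); auto.
    - apply exp_le_m. assert (theta j <= theta 1%nat) by (apply hmono; lia). lra.
    - lra.
    - rewrite <- RS0. rewrite Rplus_comm, <- RT1.
      apply Rle_trans with (rebar n theta S); auto. apply HSmax. apply ne_single; lia. }
  split.
  - exists 0%nat. split. lia. reflexivity.
  - intros T HT. apply Rle_trans with (rebar n theta S); auto. lra.
Qed.
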